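(* Let $m$ be an odd natural number and $\underline R_m=N_{D_2}^{D_{2m}}\underline{\mathbb Z}$. Then $\underline R_m(D_{2m}/D_{2m})$ is a free abelian group \[ \underline R_m(D_{2m}/D_{2m})\cong\mathbb Z\{[D_{2m}/D_{2k}]\mid k\text{ divides }m\}.\] Under the quotient map $\underline A^{D_{2m}}\to\underline R_m$, the image of $[D_{2m}/D_{2k}]$ is $[D_{2m}/D_{2k}]$ and the image of $[D_{2m}/\mu_k]$ is $2[D_{2m}/D_{2k}]$.
   Context: $D_{2m}=\langle\tau,\zeta_m\mid\tau^2=\zeta_m^m=(\tau\zeta_m)^2=1\rangle$, $D_2=\langle\tau\rangle$, $\mu_k=\langle\zeta_k\rangle$, $D_{2k}=\langle\tau,\zeta_k\rangle$ for $k\mid m$. $\underline{\mathbb Z}$ is the constant $D_2$-Mackey functor, and Mackey norms are $N_H^G\underline M=\underline\pi_0^GN_H^GH\underline M$; there is an isomorphism $N_{D_2}^{D_{2m}}\underline{\mathbb Z}\cong\underline A^{D_{2m}}/(2-[D_{2m}/\mu_m])$, the quotient of the Burnside Mackey functor by the congruence generated by $2-[D_{2m}/\mu_m]$, and the quotient map refers to this presentation. $[T]$ denotes the class of a finite $D_{2m}$-set $T$ in the Burnside ring $\underline A^{D_{2m}}(D_{2m}/D_{2m})$. *)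

(* Defs.v *)
From HB Require Import structures.
From mathcomp Require Import all_boot all_order all_algebra all_fingroup.
Set Implicit Arguments. Unset Strict Implicit. Unset Printing Implicit Defensive.
Import GRing.Theory.

(* Burnside ring A^G(G/G) of a finite group G, realised through the (injective)
   table-of-marks homomorphism: an element of A(G) is recorded by its marks,
   i.e. the function K |-> #|X^K| (for a virtual G-set X), ring operations
   being pointwise.  K ranges over all subsets of gT; the fixed points of a
   subset K are those of <<K>>, so this is harmless. *)

Section Burnside.
Variable gT : finGroupType.
Local Open Scope group_scope.

Definition mark (G H K : {set gT}) : int :=
  (#|[set C in lcosets H G | [forall k in K, (k *: C) == C]]|)%:Z.

Definition cls (G H : {set gT}) : {ffun {set gT} -> int} :=
  [ffun K => mark G H K].

Definition burnside (G : {set gT}) (a : {ffun {set gT} -> int}) : Prop :=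
  exists c : {set gT} -> int,
    (a = \sum_(H : {set gT} | group_set H && (H \subset G)) (cls G H *~ c H))%R.

Definition bmul (a b : {ffun {set gT} -> int}) : {ffun {set gT} -> int} :=
  [ffun K => (a K * b K)%R].

Definition cong_mod (G : {set gT}) (x a a' : {ffun {set gT} -> int}) : Prop :=
  exists b, burnside G b /\ (a = a' + bmul x b)%R.

End Burnside.

(* Main.v *)
Require Import Defs.
From HB Require Import structures.
From mathcomp Require Import all_boot all_order all_algebra all_fingroup all_solvable.
From mathcomp Require Import zify.
Set Implicit Arguments. Unset Strict Implicit. Unset Printing Implicit Defensive.
Import GRing.Theory.


Section Marks.
Variable gT : finGroupType.
Local Open Scope group_scope.
Implicit Types (H G : {group gT}) (K : {set gT}).

Lemma fixed_coset H (g : gT) K :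
  [forall k in K, k *: (g *: H) == g *: H] = (K :^ g \subset H).
Proof.
apply/forall_inP/subsetP => [fx y | sub k kK].
  rewrite mem_conjg => yK.
  have := fx _ yK; rewrite -lcosetM => /eqP e.
  have : (y ^ g^-1) * g \in g *: H by rewrite -e lcoset_refl.
  by rewrite mem_lcoset -conjgE conjgKV.
rewrite -lcosetM; apply/eqP/lcoset_eqP; rewrite mem_lcoset -conjgE.
by apply: sub; rewrite memJ_conjg.
Qed.

Lemma mark_fix H (G : {set gT}) K :
  mark G H K = Posz #|[set g *: H | g in [set g in G | K :^ g \subset H]]|.
Proof.
rewrite /mark; congr (Posz _); apply: eq_card => C; rewrite inE.
apply/andP/imsetP => [[/imsetP[g gG ->] fx] | [g]].
  by exists g; rewrite ?inE ?gG -?fixed_coset -?lcosetE.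
rewrite inE => /andP[gG sub] ->; split; first by apply/imsetP; exists g; rewrite ?lcosetE.
by rewrite fixed_coset.
Qed.

Lemma mark_unif H G K (P : bool) :
  (forall g, g \in G -> (K :^ g \subset H) = P) -> mark G H K = Posz (P * #|G : H|)%N.
Proof.
move=> hP; rewrite mark_fix; congr (Posz _).
case: P hP => hP.
  have -> : [set g in G | K :^ g \subset H] = G.
    by apply/setP => g; rewrite inE; case gG: (g \in G) => //=; rewrite hP.
  rewrite mul1n -card_lcosets /lcosets; apply: eq_card => C.
  by apply/imsetP/imsetP => [][g gG ->]; exists g; rewrite ?lcosetE.
have -> : [set g in G | K :^ g \subset H] = set0.
  by apply/setP => g; rewrite !inE; case gG: (g \in G) => //=; rewrite hP.
by rewrite imset0 cards0.
Qed.

Lemma mark_conj H G K w : w \in G -> mark G (H :^ w) K = mark G H K.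
Proof.
move=> wG; rewrite (mark_fix (H :^ w)%G) mark_fix; congr (Posz _).
set S := [set g in G | K :^ g \subset H].
have eq1 x : x *: (H :^ w) = ((x * w^-1) *: H) :* w.
  by rewrite conjsgE -lcosetM mulgA.
have mem1 x : (x \in [set g in G | K :^ g \subset H :^ w]) = (x * w^-1 \in S).
  by rewrite !inE groupMr ?groupV // conjsgM sub_conjgV.
rewrite -[X in _ = X](card_imset _ (@rcoset_inj _ w)); apply: eq_card => C.
  apply/imsetP/imsetP => [[g gS ->] | [C0 /imsetP[h hS ->] ->]].
  by exists ((g * w^-1) *: H); [apply/imsetP; exists (g * w^-1); rewrite -?mem1 | rewrite eq1].
by exists (h * w); rewrite ?mem1 ?eq1 mulgK.
Qed.

Lemma mark_out H G K : ~~ (K \subset G) -> H \subset G -> mark G H K = 0%R.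
Proof.
move=> nKG sHG; rewrite (@mark_unif _ _ _ false) // => g gG.
apply/negbTE; apply: contra nKG => sKH.
by rewrite -(conjGid (groupVr gG)) -sub_conjg (subset_trans sKH sHG).
Qed.

Lemma mark_normal H G K : H <| G -> mark G H K = Posz ((K \subset H) * #|G : H|)%N.
Proof.
case/andP=> sHG nHG; apply: mark_unif => g gG.
by rewrite sub_conjg; have /normP -> := subsetP nHG _ (groupVr gG).
Qed.

End Marks.


Section Ring.
Variable gT : finGroupType.
Implicit Types (a b : {ffun {set gT} -> int}).
Local Open Scope ring_scope.

Lemma fD a b K : (a + b) K = a K + b K. Proof. by rewrite ffunE. Qed.
Lemma fN a K : (- a) K = - a K. Proof. by rewrite ffunE. Qed.
Lemma fZ a (n : int) K : (a *~ n) K = a K *~ n.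
Proof. by case: n => n; rewrite ?NegzE ?mulrNz ?fN ffunMnE. Qed.

Variable G : {set gT}.

Lemma burn0 : burnside G 0.
Proof. by exists (fun _ => 0); rewrite big1 // => H _; rewrite mulr0z. Qed.

Lemma burnD a b : burnside G a -> burnside G b -> burnside G (a + b).
Proof.
move=> [c1 ->] [c2 ->]; exists (fun H => c1 H + c2 H).
by rewrite -big_split; apply: eq_bigr => H _; rewrite mulrzDr.
Qed.

Lemma burnZ a n : burnside G a -> burnside G (a *~ n).
Proof.
move=> [c ->]; exists (fun H => c H * n).
by rewrite mulrz_suml; apply: eq_bigr => H _; rewrite mulrzA.
Qed.

Lemma burnN a : burnside G a -> burnside G (- a).
Proof. by move=> /(burnZ (-1)); rewrite mulrN1z. Qed.

Lemma burn_cls (H : {group gT}) : (H \subset G)%g -> burnside G (cls G H).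
Proof.
move=> sHG; exists (fun K => (K == H :> {set gT})%:Z).
rewrite (bigD1 (H : {set gT})) /=; last by rewrite groupP sHG.
rewrite eqxx mulr1z big1 ?addr0 // => K /andP[_ nKH].
by rewrite (negbTE nKH) mulr0z.
Qed.

Lemma bmulD x a b : bmul x (a + b) = bmul x a + bmul x b.
Proof. by apply/ffunP => K; rewrite !ffunE mulrDr. Qed.

Lemma bmulZ x a n : bmul x (a *~ n) = bmul x a *~ n.
Proof. by apply/ffunP => K; rewrite fZ !ffunE fZ mulrzAr. Qed.

Lemma cong_add x a1 a2 b1 b2 : cong_mod G x a1 b1 -> cong_mod G x a2 b2 ->
  cong_mod G x (a1 + a2) (b1 + b2).
Proof.
move=> [c1 [h1 ->]] [c2 [h2 ->]]; exists (c1 + c2); split; first exact: burnD.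
by rewrite bmulD addrACA.
Qed.

Lemma cong_Z x a b n : cong_mod G x a b -> cong_mod G x (a *~ n) (b *~ n).
Proof.
move=> [c [h ->]]; exists (c *~ n); split; first exact: burnZ.
by rewrite bmulZ mulrzDl.
Qed.

Lemma cong_refl x a : cong_mod G x a a.
Proof.
exists 0; split; first exact: burn0.
by apply/ffunP => K; rewrite !ffunE mulr0 addr0.
Qed.

End Ring.

Section Dih.
Variables (gT : finGroupType) (G : {group gT}) (tau zeta : gT) (m : nat).
Hypotheses (Hodd : odd m) (HG : G :=: <<[set tau; zeta]>>%g)
  (Htau : (tau ^+ 2 = 1)%g) (Hzeta : (zeta ^+ m = 1)%g)
  (Htz : ((tau * zeta) ^+ 2 = 1)%g) (Hord : #|G| = (2 * m)%N).
Local Open Scope group_scope.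

Lemma m_gt0 : (0 < m)%N. Proof. by case: m Hodd. Qed.

Lemma tauV : tau^-1 = tau.
Proof. by apply/eqP; rewrite eq_invg_mul; apply/eqP; rewrite -{2}[tau]expg1 -expgS Htau. Qed.

Lemma zeta_tau : zeta ^ tau = zeta^-1.
Proof.
have e : tau * zeta * tau * zeta = 1 by rewrite -Htz expgS expg1 !mulgA.
by rewrite conjgE tauV mulgA -[tau * zeta * tau]mulg1 -(mulgV zeta) mulgA e mul1g.
Qed.

Lemma conjZ z : z \in <[zeta]> -> z ^ tau = z^-1.
Proof. by case/cycleP=> i ->; rewrite conjXg zeta_tau expgVn. Qed.

Lemma tau_in : tau \in G. Proof. by rewrite HG mem_gen // !inE eqxx. Qed.
Lemma zeta_in : zeta \in G. Proof. by rewrite HG mem_gen // !inE eqxx orbT. Qed.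
Lemma Z_sub : <[zeta]> \subset G. Proof. by rewrite cycle_subG zeta_in. Qed.

Lemma tau_norm (H : {group gT}) : H \subset <[zeta]> -> tau \in 'N(H).
Proof.
move=> sHZ; rewrite inE sub_conjg tauV; apply/subsetP => y yH.
rewrite mem_conjg tauV conjZ ?groupV //; exact: (subsetP sHZ).
Qed.

Lemma G_norm (H : {group gT}) : H \subset <[zeta]> -> G \subset 'N(H).
Proof.
move=> sHZ; rewrite HG gen_subG subUset !sub1set tau_norm //=.
exact: (subsetP (sub_abelian_norm (cycle_abelian zeta) sHZ)) _ (cycle_id zeta).
Qed.

Lemma normalZ (H : {group gT}) : H \subset <[zeta]> -> H <| G.
Proof. by move=> sHZ; rewrite /normal G_norm // andbT (subset_trans sHZ Z_sub). Qed.

Lemma struct : [/\ G :=: <[zeta]> * <[tau]>, #[zeta] = m, #[tau] = 2%N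
   & <[zeta]> :&: <[tau]> = 1].
Proof.
have nZT : <[tau]> \subset 'N(<[zeta]>) by rewrite cycle_subG tau_norm.
have eJ := norm_joinEr nZT.
have sGJ : G \subset <[zeta]> <*> <[tau]>.
  rewrite HG gen_subG subUset !sub1set; apply/andP; split.
    by apply: (subsetP (joing_subr _ _)); rewrite cycle_id.
  by apply: (subsetP (joing_subl _ _)); rewrite cycle_id.
have sJG : <[zeta]> <*> <[tau]> \subset G by rewrite join_subG !cycle_subG tau_in zeta_in.
have eG : G :=: <[zeta]> * <[tau]> by rewrite -eJ; apply/eqP; rewrite eqEsubset sGJ sJG.
have c : (#[zeta] * #[tau] = 2 * m * #|<[zeta]> :&: <[tau]>|)%N.
  by rewrite !orderE mul_cardG -eG Hord.
have d1 : (#[zeta] %| m)%N by rewrite order_dvdn Hzeta.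
have d2 : (#[tau] %| 2)%N by rewrite order_dvdn Htau.
have l1 := dvdn_leq m_gt0 d1. have l2 := dvdn_leq (isT : (0 < 2)%N) d2.
have p : (0 < #|<[zeta]> :&: <[tau]>|)%N by apply/card_gt0P; exists 1; rewrite group1.
have mp := m_gt0.
have e1 : #|<[zeta]> :&: <[tau]>| = 1%N by nia.
split => //; try nia.
by apply/eqP; rewrite eq_sym eqEcard sub1G cards1 e1.
Qed.


Lemma m_div_dvd k : (k %| m)%N -> (m %/ k %| #[zeta])%N.
Proof. by case: struct => _ -> _ _; apply: dvdn_div. Qed.

Lemma ord_y k : (k %| m)%N -> #[zeta ^+ (m %/ k)] = k.
Proof.
move=> km; rewrite orderXdiv ?m_div_dvd //; case: struct => _ -> _ _.
have k0 : (0 < k)%N by apply: dvdn_gt0 km; exact: m_gt0.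
by rewrite divnA // mulKn // m_gt0.
Qed.

Lemma y_sub k : <[zeta ^+ k]> \subset <[zeta]>.
Proof. by rewrite cycle_subG groupX // cycle_id. Qed.

Lemma Dk_eq k : <<[set tau; zeta ^+ k]>> = <[zeta ^+ k]> * <[tau]>.
Proof.
have nYT : <[tau]> \subset 'N(<[zeta ^+ k]>) by rewrite cycle_subG tau_norm // y_sub.
rewrite -(norm_joinEr nYT); apply/eqP; rewrite eqEsubset; apply/andP; split.
  rewrite gen_subG subUset !sub1set; apply/andP; split.
    by apply: (subsetP (joing_subr _ _)); rewrite cycle_id.
  by apply: (subsetP (joing_subl _ _)); rewrite cycle_id.
by rewrite join_subG !cycle_subG !mem_gen // !inE eqxx ?orbT.
Qed.

Lemma ZT1 : <[zeta]> :&: <[tau]> = 1.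
Proof. by case: struct. Qed.

Lemma DkI k : (<[zeta ^+ k]> * <[tau]>) :&: <[zeta]> = <[zeta ^+ k]>.
Proof. by rewrite -group_modl ?y_sub // setIC ZT1 mulg1. Qed.

Lemma card_Dk k : (k %| m)%N -> #|<<[set tau; zeta ^+ (m %/ k)]>>| = (k * 2)%N.
Proof.
move=> km; rewrite Dk_eq.
have eI : <[zeta ^+ (m %/ k)]> :&: <[tau]> = 1.
  by apply/trivgP; rewrite -ZT1 setSI // y_sub.
have := mul_cardG <[zeta ^+ (m %/ k)]> <[tau]>.
by rewrite eI cards1 muln1 -!orderE ord_y //; case: struct => _ _ -> _.
Qed.

Lemma Dk_sub k : <<[set tau; zeta ^+ k]>> \subset G.
Proof. by rewrite gen_subG subUset !sub1set tau_in groupX // zeta_in. Qed.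

Lemma idxZ : #|G : <[zeta]>| = 2%N.
Proof.
have h : (#|<[zeta]>| * #|G : <[zeta]>| = #|G|)%N := Lagrange Z_sub.
move: h; rewrite Hord -orderE; case: struct => _ -> _ _.
have := m_gt0; nia.
Qed.

Lemma idx_rel k : (k %| m)%N ->
  #|G : <[zeta ^+ (m %/ k)]>| = (2 * #|G : <<[set tau; zeta ^+ (m %/ k)]>>|)%N.
Proof.
move=> km.
have k0 : (0 < k)%N by apply: dvdn_gt0 km; exact: m_gt0.
have h1 : (#|<[zeta ^+ (m %/ k)]>| * #|G : <[zeta ^+ (m %/ k)]>| = #|G|)%N
  := Lagrange (subset_trans (y_sub (m %/ k)) Z_sub).
have h2 : (#|<<[set tau; zeta ^+ (m %/ k)]>>| * #|G : <<[set tau; zeta ^+ (m %/ k)]>>| = #|G|)%N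
  := Lagrange (Dk_sub (m %/ k)).
move: h1 h2; rewrite card_Dk // -orderE ord_y // Hord. nia.
Qed.

Lemma conjZ_sub (K : {set gT}) g : K \subset <[zeta]> -> g \in G -> K :^ g \subset <[zeta]>.
Proof.
move=> sKZ gG; rewrite sub_conjg.
by have /normP -> := subsetP (G_norm (subxx _)) _ (groupVr gG).
Qed.

Lemma markD_Z k (K : {set gT}) : K \subset <[zeta]> ->
  mark G <<[set tau; zeta ^+ k]>> K =
  Posz ((K \subset <[zeta ^+ k]>) * #|G : <<[set tau; zeta ^+ k]>>|)%N.
Proof.
move=> sKZ; apply: mark_unif => g gG.
have sKgZ := conjZ_sub sKZ gG.
have -> : (K :^ g \subset <<[set tau; zeta ^+ k]>>) =
  (K :^ g \subset <<[set tau; zeta ^+ k]>> :&: <[zeta]>) by rewrite subsetI sKgZ andbT.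
rewrite Dk_eq DkI sub_conjg.
by have /normP -> := subsetP (G_norm (y_sub k)) _ (groupVr gG).
Qed.


Lemma zm z : z \in <[zeta]> -> z ^+ m = 1.
Proof. by case/cycleP=> i ->; rewrite expgAC Hzeta expg1n. Qed.

Lemma tau_w w : w \in <[zeta]> -> tau ^ w = (w ^+ 2)^-1 * tau.
Proof.
move=> wZ; have e := conjZ wZ; rewrite conjgE tauV in e.
have tw : tau * w = w^-1 * tau.
  by rewrite -e -{4}tauV !mulgA mulgK.
by rewrite conjgE tw mulgA expgS expg1 invMg.
Qed.

Lemma refl_conj z : z \in <[zeta]> -> (z * tau) ^ (z ^+ (m.+1)./2) = tau.
Proof.
move=> zZ; set w := z ^+ _.
have wZ : w \in <[zeta]> by rewrite groupX.
rewrite conjMg tau_w //.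
have -> : z ^ w = z.
  have c : commute z w by apply: commuteX; apply: commute_refl.
  by rewrite conjgE c mulKg.
have h2 : ((m.+1)./2 * 2 = m.+1)%N.
  by rewrite muln2 -[in RHS](odd_double_half m.+1) /= Hodd.
by rewrite /w -expgM h2 expgSr zm // mul1g mulKVg.
Qed.

Lemma classify (H : {group gT}) : H \subset G -> exists2 k, (k %| m)%N &
  (cls G H = cls G <[zeta ^+ (m %/ k)]> \/ cls G H = cls G <<[set tau; zeta ^+ (m %/ k)]>>).
Proof.
move=> sHG.
have cyc (N : {group gT}) : N \subset <[zeta]> -> exists2 k, (k %| m)%N & N :=: <[zeta ^+ (m %/ k)]>.
  move=> sNZ; have om : #[zeta] = m by case: struct.
  have dk : (#|N| %| #[zeta])%N by rewrite orderE cardSg.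
  exists #|N|; first by rewrite -om.
  have : N \in [set H0 : {group gT} | H0 \subset <[zeta]> & #|H0| == #|N|] by rewrite inE sNZ eqxx.
  rewrite cycle_sub_group // => /set1P eN; rewrite -om; exact: (congr1 (@gval _) eN).
case sHZ: (H \subset <[zeta]>).
  have [k km ->] := cyc H sHZ. by exists k => //; left.
have [h hH hZ] : exists2 h, h \in H & h \notin <[zeta]> by apply/subsetPn; rewrite sHZ.
have [eG _ _ _] := struct.
have : h \in <[zeta]> * <[tau]> by rewrite -eG; exact: subsetP sHG _ hH.
move=> /mulsgP[z t zZ /cycleP[i ->] eh].
rewrite -(expg_mod _ Htau) modn2 in eh.
case oi: (odd i) in eh; last by rewrite expg0 mulg1 in eh; rewrite eh zZ in hZ.
rewrite expg1 in eh.
set w := z ^+ (m.+1)./2.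
have wG : w \in G by apply: (subsetP Z_sub); rewrite groupX.
have tH : tau \in (H :^ w)%G by rewrite /= -(refl_conj zZ) -eh memJ_conjg.
have sHwG : H :^ w \subset G by rewrite -(conjGid wG) conjSg.
have [k km eN] := cyc (H :^ w :&: <[zeta]>)%G (subsetIr _ _).
exists k => //; right.
transitivity (cls G (H :^ w)); first by apply/ffunP => K; rewrite /cls !ffunE mark_conj.
congr (cls G _).
rewrite Dk_eq -eN /= group_modr ?cycle_subG //.
by rewrite -eG; apply/esym/setIidPl.
Qed.

Lemma markGG (K : {set gT}) : mark G G K = Posz (K \subset G).
Proof. by rewrite (mark_normal _ (normal_refl G)) indexgg muln1. Qed.

Lemma claim3 k : (k %| m)%N ->
  cong_mod G (cls G G *+ 2 - cls G <[zeta]>)%R (cls G <[zeta ^+ (m %/ k)]>)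
    (cls G <<[set tau; (zeta ^+ (m %/ k))%g]>> *+ 2)%R.
Proof.
move=> km; exists (- cls G <<[set tau; (zeta ^+ (m %/ k))%g]>>)%R; split.
  by apply/burnN/burn_cls/Dk_sub.
apply/ffunP => K; rewrite !ffunE.
rewrite (mark_normal _ (normalZ (y_sub _))) (mark_normal _ (normalZ (subxx _))) markGG.
case sKZ: (K \subset <[zeta]>).
  rewrite markD_Z // idxZ idx_rel // (subset_trans sKZ Z_sub).
  rewrite /=; lia.
have -> : (K \subset <[zeta ^+ (m %/ k)]>) = false.
  by apply/negbTE; apply: contraFN sKZ => h; exact: subset_trans h (y_sub _).
case sKG: (K \subset G); last by rewrite mark_out ?sKG ?Dk_sub //; lia.
lia.
Qed.

Lemma indep (c : nat -> int) :
  cong_mod G (cls G G *+ 2 - cls G <[zeta]>)%R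
    (\sum_(k <- divisors m) cls G <<[set tau; (zeta ^+ (m %/ k))%g]>> *~ c k)%R 0%R ->
  forall k, (k %| m)%N -> c k = 0%R.
Proof.
move=> [b [_ hb]].
have key j : (j %| m)%N -> (\sum_(k <- divisors m)
   Posz ((<[(zeta ^+ (m %/ j))%g]> \subset <[(zeta ^+ (m %/ k))%g]>) *
          #|G : <<[set tau; (zeta ^+ (m %/ k))%g]>>|)%N *~ c k = 0)%R.
  move=> jm; move/ffunP/(_ <[zeta ^+ (m %/ j)]>): hb.
  rewrite /= sum_ffunE add0r !ffunE markGG (mark_normal _ (normalZ (subxx _))) idxZ.
  rewrite y_sub (subset_trans (y_sub _) Z_sub) /= => e.
  rewrite -[RHS](_ : ((1 + 1 - Posz (1 * 2)%N) * b <[(zeta ^+ (m %/ j))%g]> = 0)%R); last first.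
    by rewrite mul1n subrr mul0r.
  rewrite -e; apply: eq_bigr => k _; rewrite fZ ffunE markD_Z //; exact: y_sub.
have main n : forall k, (m - k < n)%N -> (k %| m)%N -> c k = 0%R.
  elim: n => [//|n IH] k lt km.
  have := key k km.
  rewrite (bigD1_seq k) ?divisors_uniq -?dvdn_divisors ?m_gt0 //= subxx mul1n.
  rewrite big1_seq ?addr0 => [e|k' /andP[nk' k'm]].
    move: e; rewrite mulrzz => /eqP; rewrite mulf_eq0 => /orP[|/eqP //].
    by move/eqP => h; move: (indexg_gt0 G <<[set tau; zeta ^+ (m %/ k)]>>); lia.
  case s: (<[zeta ^+ (m %/ k)]> \subset <[zeta ^+ (m %/ k')]>); last by rewrite mul0n mul0rz.
  rewrite -dvdn_divisors ?m_gt0 // in k'm.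
  rewrite (IH k') ?mulr0z //.
  have d := cardSg s; rewrite -!orderE !ord_y // in d.
  have k'0 : (0 < k')%N by apply: dvdn_gt0 k'm; exact: m_gt0.
  have l1 := dvdn_leq k'0 d. have l2 := dvdn_leq m_gt0 k'm.
  have l3 : k' != k := nk'.
  lia.
move=> k km; exact: (main (m - k).+1 k (ltnSn _) km).
Qed.

Lemma sumD_ind k (n : int) : (k %| m)%N ->
  (\sum_(j <- divisors m) cls G <<[set tau; (zeta ^+ (m %/ j))%g]>> *~ ((j == k)%:Z * n))%R
  = (cls G <<[set tau; (zeta ^+ (m %/ k))%g]>> *~ n)%R.
Proof.
move=> km.
rewrite (bigD1_seq k) ?divisors_uniq -?dvdn_divisors ?m_gt0 //= eqxx mul1r.
rewrite big1_seq ?GRing.addr0 // => j /andP[njk _].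
by rewrite (negbTE njk) mul0r mulr0z.
Qed.

Definition Sp (a : {ffun {set gT} -> int}) := exists c : nat -> int,
  cong_mod G (cls G G *+ 2 - cls G <[zeta]>)%R a
    (\sum_(k <- divisors m) cls G <<[set tau; (zeta ^+ (m %/ k))%g]>> *~ c k)%R.

Lemma span a : burnside G a -> Sp a.
Proof.
case=> c ->; apply: (big_ind Sp).
- exists (fun _ => 0%R); rewrite big1 => [|j _]; last by rewrite mulr0z.
  exact: cong_refl.
- move=> a1 a2 [c1 h1] [c2 h2]; exists (fun k => c1 k + c2 k)%R.
  suff -> : (\sum_(k <- divisors m) cls G <<[set tau; (zeta ^+ (m %/ k))%g]>> *~ (c1 k + c2 k)
     = \sum_(k <- divisors m) cls G <<[set tau; (zeta ^+ (m %/ k))%g]>> *~ c1 k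
     + \sum_(k <- divisors m) cls G <<[set tau; (zeta ^+ (m %/ k))%g]>> *~ c2 k)%R.
    exact: cong_add.
  by rewrite -big_split; apply: eq_bigr => j _; rewrite mulrzDr.
move=> H /andP[gH sHG].
suff [c' hc'] : Sp (cls G H).
  exists (fun k => c' k * c H)%R.
  suff -> : (\sum_(k <- divisors m) cls G <<[set tau; (zeta ^+ (m %/ k))%g]>> *~ (c' k * c H)
     = (\sum_(k <- divisors m) cls G <<[set tau; (zeta ^+ (m %/ k))%g]>> *~ c' k) *~ c H)%R.
    exact: cong_Z.
  by rewrite mulrz_suml; apply: eq_bigr => j _; rewrite mulrzA.
have [k km [e|e]] := @classify (Group gH) sHG; rewrite /= in e; rewrite e.
  exists (fun j => (j == k)%:Z * 2)%R; rewrite sumD_ind //; exact: claim3.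
exists (fun j => (j == k)%:Z * 1)%R; rewrite sumD_ind // mulr1z; exact: cong_refl.
Qed.

Lemma main_sec :
  let D (k : nat) : {set gT} := <<[set tau; zeta ^+ (m %/ k)]>>%g in
  let mu (k : nat) : {set gT} := <[zeta ^+ (m %/ k)]>%g in
  let x := (cls G G *+ 2 - cls G (mu m))%R in
  (forall a, burnside G a ->
     exists c : nat -> int,
       cong_mod G x a (\sum_(k <- divisors m) (cls G (D k) *~ c k))%R) /\
  (forall c : nat -> int,
     cong_mod G x (\sum_(k <- divisors m) (cls G (D k) *~ c k))%R 0%R ->
     forall k, (k %| m)%N -> c k = 0%R) /\
  (forall k, (k %| m)%N -> cong_mod G x (cls G (mu k)) (cls G (D k) *+ 2)%R).
Proof.
move=> D mu x; rewrite /x /mu /D divnn m_gt0 expg1.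
split; first exact: span.
split; first exact: indep.
exact: claim3.
Qed.

End Dih.

Theorem corollary8p20 (gT : finGroupType) (G : {group gT}) (tau zeta : gT) (m : nat)
  (Hodd : odd m)
  (HG : G :=: <<[set tau; zeta]>>%g)
  (Htau : (tau ^+ 2 = 1)%g) (Hzeta : (zeta ^+ m = 1)%g)
  (Htz : ((tau * zeta) ^+ 2 = 1)%g)
  (Hord : #|G| = (2 * m)%N) :
  let D (k : nat) : {set gT} := <<[set tau; zeta ^+ (m %/ k)]>>%g in
  let mu (k : nat) : {set gT} := <[zeta ^+ (m %/ k)]>%g in
  let x := (cls G G *+ 2 - cls G (mu m))%R in
  (* spanning: every element of A(G) is congruent mod (x) to a Z-combination of the [G/D_2k] *)
  (forall a, burnside G a ->
     exists c : nat -> int,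
       cong_mod G x a (\sum_(k <- divisors m) (cls G (D k) *~ c k))%R) /\
  (* linear independence of the images of the [G/D_2k] in A(G)/(x) *)
  (forall c : nat -> int,
     cong_mod G x (\sum_(k <- divisors m) (cls G (D k) *~ c k))%R 0%R ->
     forall k, (k %| m)%N -> c k = 0%R) /\
  (* the image of [G/mu_k] is 2 [G/D_2k] *)
  (forall k, (k %| m)%N -> cong_mod G x (cls G (mu k)) (cls G (D k) *+ 2)%R).
Proof. exact: (main_sec Hodd HG Htau Hzeta Htz Hord). Qed.
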